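(* Let $\mathsf{CS}$ be a constant specification for $\mathsf{LPC}^+$. For every set of formulas $T$ and formula $\phi$: if $T\models_{\mathsf{LPC}^+_{\mathsf{CS}}}\phi$, then $T\vdash_{\mathsf{LPC}^+_{\mathsf{CS}}}\phi$.
   Context: Language: countable sets $\mathsf{Const}$, $\mathsf{Var}$, $\mathsf{Prop}$; terms $t ::= c \mid x \mid t\cdot t \mid t+t \mid\ !t$; formulas $\phi ::= p \mid \neg\phi \mid \phi\wedge\phi \mid \phi\supset\phi \mid \phi>\phi \mid t{:}\phi$; $\mathsf{Tm},\mathsf{Fm}$ the sets of terms and formulas. Axiom schemes of $\mathsf{LPC}^+$: (A1) all instances of classical tautologies; (A2) $(\phi>(\psi\supset\chi))\supset((\phi>\psi)\supset(\phi>\chi))$; (A3) $\phi>\phi$; (A4) $(\phi>\psi)\supset(\phi\supset\psi)$; (A5) $(s{:}(\phi>\psi)\wedge t{:}\phi) > (s\cdot t){:}\psi$; (A6) $s{:}\phi > (s+t){:}\phi$; (A7) $t{:}\phi>(s+t){:}\phi$; (A8) $t{:}\phi>\phi$; (A9) $t{:}\phi > (!t){:}t{:}\phi$. A constant specification $\mathsf{CS}$ is a set of $c{:}\phi$ with $c\in\mathsf{Const}$, $\phi$ an instance of (A1)–(A9). $\mathsf{LPC}^+_{\mathsf{CS}}$: axioms (A1)–(A9) and $\mathsf{CS}$; rules (MP) from $\phi,\phi\supset\psi$ infer $\psi$, and (RCN) from $\psi$ infer $\phi>\psi$. For a set $T$: $T\vdash\phi$ iff $\vdash(\psi_1\wedge\cdots\wedge\psi_n)\supset\phi$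 for some $\psi_1,\dots,\psi_n\in T$, $n\ge0$. Relational models $\mathcal M=(W,W_N,R_{Fm},R_{Tm},V)$: $W$ nonempty, $W_N\subseteq W$ nonempty (normal states); $R_\phi\subseteq W_N\times W_N$ for each formula $\phi$; $R_t\subseteq W\times W$ for each term $t$; $V(w)\subseteq\mathsf{Prop}$ for $w\in W_N$, $V(w)\subseteq\mathsf{Fm}$ for $w\in W\setminus W_N$. Truth: at non-normal $w$, $w\models\phi$ iff $\phi\in V(w)$; at normal $w$: $p$ iff $p\in V(w)$, $\neg,\wedge,\supset$ classical, $\phi>\psi$ iff $R_\phi(w)\subseteq[\psi]$, $t{:}\phi$ iff $R_t(w)\subseteq[\phi]$, with $[\phi]=\{w\in W: w\models\phi\}$. An $\mathsf{LPC}^+_{\mathsf{CS}}$-model is a relational model such that for all $w\in W_N$: (1) $R_\phi(w)\subseteq[\phi]$ for all $\phi$; (2) if $w\in[\phi]$ then $w\in R_\phi(w)$; (3) $R_c(w)\subseteq[\phi]$ for each $c{:}\phi\in\mathsf{CS}$; (4) $R_{s+t}(w)\subseteq R_s(w)\cap R_t(w)$; (5) for all $v\in R_{s\cdot t}(w)$ and all $\phi,\psi$: if $w\in[s{:}(\phi>\psi)\wedge t{:}\phi]$ then $v\in[\psi]$; (6) $wR_tw$ for all $t$; (7) for all $t$ and $v,u\in W$, if $wR_{!t}v$ and $vR_tu$ then $wR_tu$. $T\models_{\mathsf{LPC}^+_{\mathsf{CS}}}\phi$ iff for every $\mathsf{LPC}^+_{\mathsf{CS}}$-model and every $w\in W_N$,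 if every member of $T$ is true at $w$ then $\phi$ is true at $w$. *)

(* Defs.v *)
From Stdlib Require Import List.
Import ListNotations.

(* Const, Var, Prop are countable sets: represented by nat. *)
Definition Const := nat.
Definition Var := nat.
Definition PropVar := nat.

Inductive Tm : Type :=
| TConst : Const -> Tm
| TVar : Var -> Tm
| TApp : Tm -> Tm -> Tm
| TPlus : Tm -> Tm -> Tm
| TBang : Tm -> Tm.

Inductive Fm : Type :=
| FAtom : PropVar -> Fm
| FNeg : Fm -> Fm
| FAnd : Fm -> Fm -> Fm
| FImp : Fm -> Fm -> Fm
| FCond : Fm -> Fm -> Fm
| FJust : Tm -> Fm -> Fm.

Inductive PFm : Type :=
| PVar : nat -> PFm
| PNeg : PFm -> PFm
| PAnd : PFm -> PFm -> PFm
| PImp : PFm -> PFm -> PFm.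

Fixpoint peval (v : nat -> bool) (A : PFm) : bool :=
  match A with
  | PVar n => v n
  | PNeg A => negb (peval v A)
  | PAnd A B => andb (peval v A) (peval v B)
  | PImp A B => orb (negb (peval v A)) (peval v B)
  end.

Definition tautology (A : PFm) : Prop := forall v, peval v A = true.

Fixpoint psubst (s : nat -> Fm) (A : PFm) : Fm :=
  match A with
  | PVar n => s n
  | PNeg A => FNeg (psubst s A)
  | PAnd A B => FAnd (psubst s A) (psubst s B)
  | PImp A B => FImp (psubst s A) (psubst s B)
  end.

Definition taut_instance (phi : Fm) : Prop :=
  exists A s, tautology A /\ phi = psubst s A.

Inductive IsAxiom : Fm -> Prop :=
| A1 : forall phi, taut_instance phi -> IsAxiom phi
| A2 : forall phi psi chi,
    IsAxiom (FImp (FCond phi (FImp psi chi))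
                (FImp (FCond phi psi) (FCond phi chi)))
| A3 : forall phi, IsAxiom (FCond phi phi)
| A4 : forall phi psi, IsAxiom (FImp (FCond phi psi) (FImp phi psi))
| A5 : forall s t phi psi,
    IsAxiom (FCond (FAnd (FJust s (FCond phi psi)) (FJust t phi))
                 (FJust (TApp s t) psi))
| A6 : forall s t phi, IsAxiom (FCond (FJust s phi) (FJust (TPlus s t) phi))
| A7 : forall s t phi, IsAxiom (FCond (FJust t phi) (FJust (TPlus s t) phi))
| A8 : forall t phi, IsAxiom (FCond (FJust t phi) phi)
| A9 : forall t phi, IsAxiom (FCond (FJust t phi) (FJust (TBang t) (FJust t phi))).

Definition ConstSpec (CS : Fm -> Prop) : Prop :=
  forall chi, CS chi -> exists c phi, chi = FJust (TConst c) phi /\ IsAxiom phi.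

Inductive Prov (CS : Fm -> Prop) : Fm -> Prop :=
| P_ax : forall phi, IsAxiom phi -> Prov CS phi
| P_cs : forall phi, CS phi -> Prov CS phi
| P_mp : forall phi psi, Prov CS phi -> Prov CS (FImp phi psi) -> Prov CS psi
| P_rcn : forall phi psi, Prov CS psi -> Prov CS (FCond phi psi).

(* T |- phi : |- (psi_1 /\ ... /\ psi_n) -> phi for some psi_i in T, n >= 0;
   for n = 0 this means |- phi. *)
Definition bigconj (psi0 : Fm) (l : list Fm) : Fm := fold_left FAnd l psi0.

Definition derives (CS : Fm -> Prop) (T : Fm -> Prop) (phi : Fm) : Prop :=
  Prov CS phi \/
  exists psi0 l, T psi0 /\ (forall psi, In psi l -> T psi) /\
                 Prov CS (FImp (bigconj psi0 l) phi).

Record RModel : Type := {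
  W : Type;
  WN : W -> Prop;
  Rf : Fm -> W -> W -> Prop;
  Rt : Tm -> W -> W -> Prop;
  Vp : W -> PropVar -> Prop;         (* V(w) subset Prop, for normal w *)
  Vf : W -> Fm -> Prop               (* V(w) subset Fm, for non-normal w *)
}.

Fixpoint sat (M : RModel) (w : W M) (phi : Fm) : Prop :=
  (WN M w ->
     match phi with
     | FAtom p => Vp M w p
     | FNeg a => ~ sat M w a
     | FAnd a b => sat M w a /\ sat M w b
     | FImp a b => sat M w a -> sat M w b
     | FCond a b => forall v, Rf M a w v -> sat M v b
     | FJust t a => forall v, Rt M t w v -> sat M v a
     end) /\
  (~ WN M w -> Vf M w phi).

Definition is_relational_model (M : RModel) : Prop :=
  (exists w, WN M w) /\
  (forall phi w v, Rf M phi w v -> WN M w /\ WN M v).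

Definition is_LPC_model (CS : Fm -> Prop) (M : RModel) : Prop :=
  is_relational_model M /\
  forall w, WN M w ->
    (forall phi v, Rf M phi w v -> sat M v phi) /\
    (forall phi, sat M w phi -> Rf M phi w w) /\
    (forall c phi, CS (FJust (TConst c) phi) ->
                 forall v, Rt M (TConst c) w v -> sat M v phi) /\
    (forall s t v, Rt M (TPlus s t) w v -> Rt M s w v /\ Rt M t w v) /\
    (forall s t v phi psi, Rt M (TApp s t) w v ->
                 sat M w (FAnd (FJust s (FCond phi psi)) (FJust t phi)) ->
                 sat M v psi) /\
    (forall t, Rt M t w w) /\
    (forall t v u, Rt M (TBang t) w v -> Rt M t v u -> Rt M t w u).

Definition entails (CS : Fm -> Prop) (T : Fm -> Prop) (phi : Fm) : Prop :=
  forall M : RModel, is_LPC_model CS M ->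
    forall w, WN M w -> (forall psi, T psi -> sat M w psi) -> sat M w phi.

(* Main.v *)
Require Import Defs.
From Stdlib Require Import List Classical ClassicalEpsilon Cantor Lia.
Import ListNotations.

Definition top : Fm := FImp (FAtom 0) (FAtom 0).
Definition bot : Fm := FNeg top.
Fixpoint cl (l : list Fm) : Fm := match l with [] => top | x :: l => FAnd x (cl l) end.

Definition s3 (a b c : Fm) : nat -> Fm := fun n => match n with 0 => a | 1 => b | _ => c end.

Ltac taut A a b c :=
  apply P_ax, A1; exists A, (s3 a b c); split;
  [ let v := fresh in intro v; simpl; destruct (v 0), (v 1), (v 2); reflexivity | reflexivity ].

Notation "'#' n" := (PVar n) (at level 1).

Lemma mp {CS} a b : Prov CS a -> Prov CS (FImp a b) -> Prov CS b.
Proof. intros H1 H2; exact (P_mp CS a b H1 H2). Qed.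

Lemma prov_top CS : Prov CS top.
Proof. taut (PImp (#0) (#0)) (FAtom 0) top top. Qed.

Lemma comb {CS} x a b c : Prov CS (FImp x a) -> Prov CS (FImp x b) ->
  Prov CS (FImp a (FImp b c)) -> Prov CS (FImp x c).
Proof.
  intros H1 H2 H3.
  assert (Prov CS (FImp (FImp x a) (FImp (FImp x b) (FImp (FImp a (FImp b c)) (FImp x c))))).
  { apply P_ax, A1.
    exists (PImp (PImp (#0) (#1)) (PImp (PImp (#0) (#2)) (PImp (PImp (#1) (PImp (#2) (#3))) (PImp (#0) (#3))))),
      (fun n => match n with 0 => x | 1 => a | 2 => b | _ => c end).
    split; [intro v; simpl; destruct (v 0), (v 1), (v 2), (v 3); reflexivity | reflexivity]. }
  eauto using mp.
Qed.

Lemma imp_trans {CS} x a c : Prov CS (FImp x a) -> Prov CS (FImp a c) -> Prov CS (FImp x c).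
Proof.
  intros H1 H2. apply (comb x a a c); auto.
  assert (Prov CS (FImp (FImp a c) (FImp a (FImp a c)))) by taut (PImp (PImp (#0) (#1)) (PImp (#0) (PImp (#0) (#1)))) a c c.
  eauto using mp.
Qed.

Lemma imp_const {CS} x a : Prov CS a -> Prov CS (FImp x a).
Proof.
  intros H. assert (Prov CS (FImp a (FImp x a))) by taut (PImp (#0) (PImp (#1) (#0))) a x x.
  eauto using mp.
Qed.

Definition Der CS (G : Fm -> Prop) (p : Fm) : Prop :=
  exists l, (forall x, In x l -> G x) /\ Prov CS (FImp (cl l) p).

Definition add (G : Fm -> Prop) (a : Fm) : Fm -> Prop := fun x => G x \/ x = a.

Lemma cl_app1 {CS} l1 l2 : Prov CS (FImp (cl (l1 ++ l2)) (cl l1)).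
Proof.
  induction l1; simpl.
  - apply imp_const, prov_top.
  - apply (comb _ a (cl l1) _).
    + taut (PImp (PAnd (#0) (#1)) (#0)) a (cl (l1 ++ l2)) a.
    + eapply imp_trans; [|exact IHl1]. taut (PImp (PAnd (#0) (#1)) (#1)) a (cl (l1 ++ l2)) a.
    + taut (PImp (#0) (PImp (#1) (PAnd (#0) (#1)))) a (cl l1) a.
Qed.

Lemma cl_app2 {CS} l1 l2 : Prov CS (FImp (cl (l1 ++ l2)) (cl l2)).
Proof.
  induction l1; simpl.
  - taut (PImp (#0) (#0)) (cl l2) top top.
  - eapply imp_trans; [|exact IHl1]. taut (PImp (PAnd (#0) (#1)) (#1)) a (cl (l1 ++ l2)) a.
Qed.

Lemma der_mp {CS G} a b : Der CS G a -> Der CS G (FImp a b) -> Der CS G b.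
Proof.
  intros [l1 [H1 P1]] [l2 [H2 P2]]. exists (l1 ++ l2). split.
  - intros x Hx; apply in_app_or in Hx; destruct Hx; auto.
  - apply (comb _ a (FImp a b) b).
    + eapply imp_trans; [apply cl_app1|exact P1].
    + eapply imp_trans; [apply cl_app2|exact P2].
    + taut (PImp (#0) (PImp (PImp (#0) (#1)) (#1))) a b b.
Qed.

Lemma der_prov {CS G} a : Prov CS a -> Der CS G a.
Proof. intros; exists []; split; [intros x []| apply imp_const; auto]. Qed.

Lemma der_in {CS G} a : G a -> Der CS G a.
Proof.
  intros; exists [a]; split; [intros x [->|[]]; auto|].
  simpl; taut (PImp (PAnd (#0) (#1)) (#0)) a top top.
Qed.

Lemma der_mono {CS G G'} a : (forall x, G x -> G' x) -> Der CS G a -> Der CS G' a.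
Proof. intros H [l [H1 H2]]; exists l; split; auto. Qed.

Lemma der_imp {CS G} a b : Der CS G a -> Prov CS (FImp a b) -> Der CS G b.
Proof. intros; eapply der_mp; eauto using der_prov. Qed.

Lemma deduction {CS G} a p : Der CS (add G a) p -> Der CS G (FImp a p).
Proof.
  intros [l [Hl Hp]]. revert p Hp. induction l as [|x l IH]; intros p Hp.
  - apply der_prov. simpl in Hp. apply (imp_trans _ top); [apply imp_const, prov_top|].
    assert (Prov CS (FImp (FImp top p) (FImp top (FImp a p)))) by
      taut (PImp (PImp (#0) (#1)) (PImp (#0) (PImp (#2) (#1)))) top p a.
    eauto using mp.
  - assert (Prov CS (FImp (cl l) (FImp x p))).
    { assert (Prov CS (FImp (FImp (FAnd x (cl l)) p) (FImp (cl l) (FImp x p)))) by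
        taut (PImp (PImp (PAnd (#0) (#1)) (#2)) (PImp (#1) (PImp (#0) (#2)))) x (cl l) p.
      eauto using mp. }
    destruct (IH (fun y Hy => Hl y (or_intror Hy)) _ H) as [l' [Hl' Hp']].
    destruct (Hl x (or_introl eq_refl)) as [Gx| ->].
    + exists (x :: l'). split; [intros y [<-|Hy]; auto|].
      simpl. assert (Prov CS (FImp (FImp (cl l') (FImp a (FImp x p))) (FImp (FAnd x (cl l')) (FImp a p)))).
      { apply P_ax, A1.
        exists (PImp (PImp (#0) (PImp (#1) (PImp (#2) (#3)))) (PImp (PAnd (#2) (#0)) (PImp (#1) (#3)))),
          (fun n => match n with 0 => cl l' | 1 => a | 2 => x | _ => p end).
        split; [intro v; simpl; destruct (v 0), (v 1), (v 2), (v 3); reflexivity | reflexivity]. }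
      eauto using mp.
    + exists l'. split; auto. eapply imp_trans; [exact Hp'|].
      taut (PImp (PImp (#0) (PImp (#0) (#1))) (PImp (#0) (#1))) a p p.
Qed.

Definition Cons CS G := ~ Der CS G bot.
Definition MCS CS G := Cons CS G /\ forall p, G p \/ G (FNeg p).

Lemma der_bot_any {CS G} p : Der CS G bot -> Der CS G p.
Proof. intros H; eapply der_imp; [exact H|]. taut (PImp (PNeg (PImp (#0) (#0))) (#1)) (FAtom 0) p p. Qed.

Lemma cons_split {CS G} a : Cons CS G -> Cons CS (add G a) \/ Cons CS (add G (FNeg a)).
Proof.
  intros HG. destruct (classic (Cons CS (add G a))); auto. right. intro H2.
  apply NNPP in H. apply deduction in H. apply deduction in H2. apply HG.
  eapply der_mp; [exact H|]. eapply der_mp; [exact H2|].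
  apply der_prov. taut (PImp (PImp (PNeg (#0)) (#1)) (PImp (PImp (#0) (#1)) (#1))) a bot bot.
Qed.

Lemma mcs_der {CS G} p : MCS CS G -> Der CS G p -> G p.
Proof.
  intros [HC HM] H. destruct (HM p) as [|Hn]; auto. exfalso; apply HC.
  eapply der_mp; [exact H|]. eapply der_mp; [apply der_in, Hn|].
  apply der_prov. taut (PImp (PNeg (#0)) (PImp (#0) (#1))) p bot bot.
Qed.

Lemma mcs_prov {CS G} p : MCS CS G -> Prov CS p -> G p.
Proof. intros; apply (mcs_der (CS:=CS)); auto using der_prov. Qed.

Lemma mcs_mp {CS G} a b : MCS CS G -> G a -> G (FImp a b) -> G b.
Proof. intros H H1 H2; apply (mcs_der (CS:=CS)); auto; apply (der_mp a b); apply der_in; auto. Qed.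

Lemma mcs_neg {CS G} p : MCS CS G -> (G (FNeg p) <-> ~ G p).
Proof.
  intros HG; split.
  - intros H1 H2. apply (proj1 HG). eapply der_mp; [apply der_in, H2|].
    eapply der_mp; [apply der_in, H1|]. apply der_prov.
    taut (PImp (PNeg (#0)) (PImp (#0) (#1))) p bot bot.
  - intros H. destruct (proj2 HG p); tauto.
Qed.

Lemma mcs_and {CS G} a b : MCS CS G -> (G (FAnd a b) <-> G a /\ G b).
Proof.
  intros HG; split.
  - intros H; split; eapply (mcs_mp (CS:=CS)); eauto; apply (mcs_prov (CS:=CS)); auto.
    + taut (PImp (PAnd (#0) (#1)) (#0)) a b b.
    + taut (PImp (PAnd (#0) (#1)) (#1)) a b b.
  - intros [H1 H2]. apply (mcs_mp (CS:=CS) b); auto. apply (mcs_mp (CS:=CS) a); auto. apply (mcs_prov (CS:=CS)); auto.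
    taut (PImp (#0) (PImp (#1) (PAnd (#0) (#1)))) a b b.
Qed.

Lemma mcs_imp {CS G} a b : MCS CS G -> (G (FImp a b) <-> (G a -> G b)).
Proof.
  intros HG; split.
  - intros; eapply (mcs_mp (CS:=CS)); eauto.
  - intros H. destruct (proj2 HG a) as [Ha|Hna].
    + eapply (mcs_mp (CS:=CS)); [auto|apply H, Ha|]. apply (mcs_prov (CS:=CS)); auto. taut (PImp (#1) (PImp (#0) (#1))) a b b.
    + eapply (mcs_mp (CS:=CS)); [auto|apply Hna|]. apply (mcs_prov (CS:=CS)); auto. taut (PImp (PNeg (#0)) (PImp (#0) (#1))) a b b.
Qed.

Definition pr (a b : nat) : nat := to_nat (a, b).
Arguments pr : simpl never.
Lemma pr_inj a b c d : pr a b = pr c d -> a = c /\ b = d.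
Proof.
  unfold pr; intro H. assert (E := f_equal of_nat H). rewrite !cancel_of_to in E.
  inversion E; auto.
Qed.

Fixpoint encT (t : Tm) : nat :=
  match t with
  | TConst c => pr 0 c
  | TVar x => pr 1 x
  | TApp s u => pr 2 (pr (encT s) (encT u))
  | TPlus s u => pr 3 (pr (encT s) (encT u))
  | TBang s => pr 4 (encT s)
  end.

Fixpoint encF (f : Fm) : nat :=
  match f with
  | FAtom p => pr 0 p
  | FNeg a => pr 1 (encF a)
  | FAnd a b => pr 2 (pr (encF a) (encF b))
  | FImp a b => pr 3 (pr (encF a) (encF b))
  | FCond a b => pr 4 (pr (encF a) (encF b))
  | FJust t a => pr 5 (pr (encT t) (encF a))
  end.

Ltac prinj := repeat match goal with H : pr _ _ = pr _ _ |- _ =>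
   let H1 := fresh in let H2 := fresh in apply pr_inj in H; destruct H as [H1 H2] end.

Lemma encT_inj t u : encT t = encT u -> t = u.
Proof.
  revert u; induction t; destruct u; simpl; intro H; prinj; try discriminate; subst; f_equal; auto.
Qed.

Lemma encF_inj t u : encF t = encF u -> t = u.
Proof.
  revert u; induction t; destruct u; simpl; intro H; prinj; try discriminate; subst; f_equal; auto using encT_inj.
Qed.

Definition enum (n : nat) : Fm := epsilon (inhabits (FAtom 0)) (fun f => encF f = n).

Lemma enum_surj f : enum (encF f) = f.
Proof.
  apply encF_inj. unfold enum. apply (epsilon_spec (inhabits (FAtom 0)) (fun g => encF g = encF f)).
  eauto.
Qed.

Definition step CS (n : nat) (G : Fm -> Prop) : Fm -> Prop :=
  fun x => G x \/ (x = enum n /\ Cons CS (add G (enum n))) \/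
           (x = FNeg (enum n) /\ ~ Cons CS (add G (enum n))).

Fixpoint chain CS (G : Fm -> Prop) (n : nat) : Fm -> Prop :=
  match n with 0 => G | S n => step CS n (chain CS G n) end.

Lemma chain_mono CS G n m x : n <= m -> chain CS G n x -> chain CS G m x.
Proof. induction 1; simpl; unfold step; auto. Qed.

Lemma chain_cons CS G n : Cons CS G -> Cons CS (chain CS G n).
Proof.
  intro HG; induction n; simpl; auto.
  destruct (classic (Cons CS (add (chain CS G n) (enum n)))) as [Hc|Hc].
  - intro H; apply Hc. revert H; apply der_mono. unfold step, add; intros x [|[[]|[]]]; tauto.
  - destruct (cons_split (enum n) IHn) as [|H2]; [tauto|].
    intro H; apply H2. revert H; apply der_mono. unfold step, add; intros x [|[[]|[]]]; tauto.
Qed.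

Lemma lindenbaum CS G : Cons CS G -> exists D, MCS CS D /\ forall x, G x -> D x.
Proof.
  intro HG. exists (fun x => exists n, chain CS G n x). split; [split|].
  - intros [l [Hl Hp]].
    assert (exists N, forall x, In x l -> chain CS G N x) as [N HN].
    { clear Hp. induction l as [|a l IH].
      - exists 0; intros x [].
      - destruct (Hl a (or_introl eq_refl)) as [n1 H1].
        destruct IH as [n2 H2]; [intros; apply Hl; right; auto|].
        exists (n1 + n2). intros x [<-|Hx].
        + eapply chain_mono; [|exact H1]; lia.
        + eapply chain_mono; [|apply H2; exact Hx]; lia. }
    apply (chain_cons CS G N HG). exists l; auto.
  - intro p. assert (E := enum_surj p). set (n := encF p) in *.
    destruct (classic (Cons CS (add (chain CS G n) (enum n)))).
    + left; exists (S n); simpl; unfold step; rewrite E in *; auto.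
    + right; exists (S n); simpl; unfold step; rewrite E in *; auto.
  - intros x Hx; exists 0; auto.
Qed.

Lemma mcs_ax {CS G} p : MCS CS G -> IsAxiom p -> G p.
Proof. intros; apply (mcs_prov (CS:=CS)); auto; apply P_ax; auto. Qed.

Lemma mcs_cmp {CS G} a c d : MCS CS G -> G (FCond a (FImp c d)) -> G (FCond a c) -> G (FCond a d).
Proof.
  intros HG H1 H2. apply (mcs_mp (CS:=CS) (FCond a c)); auto.
  apply (mcs_mp (CS:=CS) (FCond a (FImp c d))); auto. apply (mcs_ax (CS:=CS)); auto. apply A2.
Qed.

Lemma mcs_cprov {CS G} a c : MCS CS G -> Prov CS c -> G (FCond a c).
Proof. intros; apply (mcs_prov (CS:=CS)); auto; apply P_rcn; auto. Qed.

Lemma mcs_ccl {CS G} a l : MCS CS G -> (forall x, In x l -> G (FCond a x)) -> G (FCond a (cl l)).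
Proof.
  intros HG; induction l as [|x l IH]; intro Hl; simpl.
  - apply (mcs_cprov (CS:=CS)); auto. apply prov_top.
  - apply (mcs_cmp (CS:=CS) a (cl l)); [exact HG| |apply IH; intros; apply Hl; right; auto].
    apply (mcs_cmp (CS:=CS) a x); [exact HG| |apply Hl; left; auto].
    apply (mcs_cprov (CS:=CS)); auto.
    taut (PImp (#0) (PImp (#1) (PAnd (#0) (#1)))) x (cl l) x.
Qed.

Lemma mcs_cimp {CS G} a b : MCS CS G -> G (FCond a b) -> G a -> G b.
Proof.
  intros HG H1 H2. apply (mcs_mp (CS:=CS) a); auto.
  apply (mcs_mp (CS:=CS) (FCond a b)); auto. apply (mcs_ax (CS:=CS)); auto. apply A4.
Qed.

Lemma mcs_just {CS G} t a : MCS CS G -> G (FJust t a) -> G a.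
Proof. intros HG H. apply (mcs_cimp (CS:=CS) (FJust t a)); auto. apply (mcs_ax (CS:=CS)); auto. apply A8. Qed.

Definition Wt := ((Fm -> Prop) * bool)%type.
Definition WNc CS (w : Wt) : Prop := snd w = true /\ MCS CS (fst w).

Definition cmodel CS : RModel := {|
  W := Wt;
  WN := WNc CS;
  Rf := fun a w v => WNc CS w /\ WNc CS v /\ fst v a /\ forall b, fst w (FCond a b) -> fst v b;
  Rt := fun t w v => WNc CS w /\ (v = w \/ (snd v = false /\ forall b, fst w (FJust t b) -> fst v b));
  Vp := fun w p => fst w (FAtom p);
  Vf := fun w a => fst w a |}.

Lemma truth CS a : forall w : Wt, sat (cmodel CS) w a <-> fst w a.
Proof.
  induction a; intro w; destruct (classic (WNc CS w)) as [Hw|Hw];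
    try (simpl; split; [intros [_ H]; apply H; exact Hw | intros H; split; [intro; contradiction | auto]]);
    (simpl; split; [intros [H _]; specialize (H Hw) | intros Hx; split; [intros _ | intros; contradiction]]);
    destruct Hw as [Hbb HG].
  - exact H.
  - exact Hx.
  - apply (mcs_neg (CS:=CS)); auto. rewrite <- IHa; auto.
  - rewrite IHa. apply (mcs_neg (CS:=CS)); auto.
  - apply (mcs_and (CS:=CS)); auto. rewrite <- IHa1, <- IHa2; auto.
  - apply (mcs_and (CS:=CS)) in Hx; auto. rewrite IHa1, IHa2; auto.
  - apply (mcs_imp (CS:=CS)); auto. rewrite <- IHa1, <- IHa2; auto.
  - rewrite IHa1, IHa2. apply (mcs_imp (CS:=CS)); auto.
  -
    apply NNPP; intro Hn.
    set (G0 := fun x => fst w (FCond a1 x)).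
    assert (HC : Cons CS (add (add G0 a1) (FNeg a2))).
    { intro Hd. apply deduction, deduction in Hd.
      assert (Hd2 : Der CS G0 (FImp a1 a2)).
      { eapply der_imp; [exact Hd|].
        taut (PImp (PImp (#0) (PImp (PNeg (#1)) (PNeg (PImp (#2) (#2))))) (PImp (#0) (#1))) a1 a2 (FAtom 0). }
      destruct Hd2 as [l [Hl Hp]]. apply Hn.
      apply (mcs_cmp (CS:=CS) a1 a1); auto; [|apply (mcs_ax (CS:=CS)); auto; apply A3].
      apply (mcs_cmp (CS:=CS) a1 (cl l)); auto.
      - apply (mcs_cprov (CS:=CS)); auto.
      - apply (mcs_ccl (CS:=CS)); auto. }
    destruct (lindenbaum CS _ HC) as [D [HD HsD]].
    assert (Hv : WNc CS (D, true)) by (split; auto).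
    assert (Rf (cmodel CS) a1 w (D, true)).
    { simpl. split; [split; auto|]. split; auto. split.
      - apply HsD; left; right; auto.
      - intros b Hb; apply HsD; left; left; exact Hb. }
    apply H in H0. apply IHa2 in H0. simpl in H0.
    apply (proj1 (mcs_neg (CS:=CS) a2 HD)); [apply HsD; right; reflexivity | exact H0].
  - intros v [_ [_ [_ Hv]]]. apply IHa2, Hv, Hx.
  -
    set (v := ((fun b => fst w (FJust t b)), false) : Wt).
    assert (Rt (cmodel CS) t w v) by (simpl; split; [split; auto| right; split; auto]).
    apply H in H0. apply IHa in H0. exact H0.
  - intros v [_ [->|[_ Hv]]]; apply IHa.
    + apply (mcs_just (CS:=CS) t); auto.
    + apply Hv, Hx.
Qed.

Lemma rt_just CS t a (w v : Wt) : Rt (cmodel CS) t w v -> fst w (FJust t a) -> fst v a.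
Proof.
  intros [[_ HG] [->|[_ Hv]]] H; auto. apply (mcs_just (CS:=CS) t); auto.
Qed.

Lemma cmodel_ok CS (D : Fm -> Prop) : MCS CS D -> is_LPC_model CS (cmodel CS).
Proof.
  intros HD. split.
  - split; [exists (D, true); split; auto|]. intros phi w v [H1 [H2 _]]; auto.
  - intros w Hw. pose proof Hw as [Hbb HG].
    split; [|split; [|split; [|split; [|split; [|split]]]]].
    + intros phi v [_ [_ [Hv _]]]. apply truth; auto.
    + intros phi Hs. apply truth in Hs. simpl. split; auto. split; auto. split; auto.
      intros b Hc. apply (mcs_cimp (CS:=CS) phi); auto.
    + intros c phi Hcs v Hr. apply truth. eapply rt_just; [exact Hr|].
      apply (mcs_prov (CS:=CS)); auto. apply P_cs; auto.
    + intros s t v [_ [->|[Hn Hv]]]; simpl; (split; [split; auto|split; auto]); right; split; auto;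
        intros b Hb; apply Hv.
      * apply (mcs_cimp (CS:=CS) (FJust s b)); auto. apply (mcs_ax (CS:=CS)); auto. apply A6.
      * apply (mcs_cimp (CS:=CS) (FJust t b)); auto. apply (mcs_ax (CS:=CS)); auto. apply A7.
    + intros s t v phi psi Hr Hs. apply truth. apply truth in Hs.
      eapply rt_just; [exact Hr|]. apply (mcs_cimp (CS:=CS) _ _ HG (mcs_ax _ HG (A5 s t phi psi)) Hs).
    + intros t; simpl; auto.
    + intros t v u [_ [->|[Hn _]]] Hr; auto. destruct Hr as [[Hb' _] _]. congruence.
Qed.

Lemma bigconj_cl CS p l : Prov CS (FImp (bigconj p l) (cl (p :: l))).
Proof.
  revert p; induction l as [|y l IH]; intro p; simpl.
  - taut (PImp (#0) (PAnd (#0) (PImp (#1) (#1)))) p (FAtom 0) p.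
  - unfold bigconj in *. simpl. eapply imp_trans; [apply IH|]. simpl.
    taut (PImp (PAnd (PAnd (#0) (#1)) (#2)) (PAnd (#0) (PAnd (#1) (#2)))) p y (cl l).
Qed.

Theorem mainTheorem10 (CS : Fm -> Prop) (HCS : ConstSpec CS)
  (T : Fm -> Prop) (phi : Fm) :
  entails CS T phi -> derives CS T phi.
Proof.
  intros He. apply NNPP; intro Hn.
  assert (HC : Cons CS (add T (FNeg phi))).
  { intro Hd. apply deduction in Hd.
    assert (Hd2 : Der CS T phi).
    { eapply der_imp; [exact Hd|].
      taut (PImp (PImp (PNeg (#0)) (PNeg (PImp (#1) (#1)))) (#0)) phi (FAtom 0) phi. }
    destruct Hd2 as [[|x l] [Hl Hp]]; apply Hn.
    - left. eapply mp; [apply prov_top|exact Hp].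
    - right. exists x, l. split; [apply Hl; left; auto|]. split; [intros; apply Hl; right; auto|].
      eapply imp_trans; [apply bigconj_cl|exact Hp]. }
  destruct (lindenbaum CS _ HC) as [D [HD HsD]].
  assert (Hw : WNc CS (D, true)) by (split; auto).
  pose proof (He (cmodel CS) (cmodel_ok CS D HD) (D, true) Hw) as H.
  assert (sat (cmodel CS) (D, true) phi) as Hs.
  { apply H. intros psi Hp. apply truth. apply HsD. left; auto. }
  apply truth in Hs. simpl in Hs.
  apply (proj1 (mcs_neg (CS:=CS) phi HD)); [apply HsD; right; reflexivity | exact Hs].
Qed.
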